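(* Let $\lambda,\mu\in\mathbb R$ with $\mu>0$, $3\lambda+2\mu>0$, let $0<\theta_0<\pi/2$ and $$B_{\theta_0}=\{\beta=|\beta|e^{i\theta}\in\mathbb C:\ |\theta|\le\theta_0\ \text{or}\ |\theta-\pi|\le\theta_0\}.$$ With $A=\begin{pmatrix}\lambda+2\mu&0\\0&\mu\end{pmatrix}$, $B=\begin{pmatrix}0&\lambda+\mu\\\lambda+\mu&0\end{pmatrix}$, $C=\begin{pmatrix}\mu&0\\0&\lambda+2\mu\end{pmatrix}$, let $L_0(\xi,\beta)=A\xi^2+\beta B\xi+\beta^2C$. Then: (i) for all $\xi\in\mathbb R$ and $\beta\in B_{\theta_0}$ with $|\xi|+|\beta|\neq0$, $\det L_0(\xi,\beta)\neq0$; (ii) for every $\beta\in B_{\theta_0}$, $\beta\neq0$, the roots (counted with multiplicity) of the degree-four polynomial equation $\det L_0(z,\beta)=0$ in $z\in\mathbb C$ are equally distributed between the open upper and open lower half-planes (two in each). Consequently the differential operator $L(D_1,\beta)=AD_1^2+\beta BD_1+\beta^2C-\omega^2\rho I$ ($D_1=-i\partial_1$, $\omega,\rho>0$), of order $s=2$ acting on $\mathbb C^2$-valued functions with $r=2=Ns/2$ boundary conditions, satisfies the Agranovich–Vishik ellipticity-with-parameter condition on the parameter set $B_{\theta_0}$.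
   Context: The Agranovich–Vishik ellipticity-with-parameter condition for a one-dimensional $N\times N$ system of order $s$ with principal symbol $L_0(\xi,q)$, parameter $q$ in a set $Q$, means: $\det L_0(\xi,q)\ne0$ for real $\xi$, $q\in Q$, $|\xi|+|q|\ne0$; for $q\in Q\setminus\{0\}$ the roots in $z$ of $\det L_0(z,q)=0$ are equally distributed between the upper and lower half-planes; and the number of boundary conditions is $Ns/2$. *)

(* Defs.v *)
From HB Require Import structures.
From mathcomp Require Import all_boot all_order all_algebra.
From mathcomp Require Import reals trigo.
From mathcomp Require Export complex.
Set Implicit Arguments. Unset Strict Implicit. Unset Printing Implicit Defensive.
Import Order.TTheory GRing.Theory Num.Theory.
Local Open Scope ring_scope.
Local Open Scope complex_scope.

Section Defs.
Variable R : realType.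
Local Notation C := R[i].

Definition in_Bsector (th0 : R) (b : C) : Prop :=
  exists r th : R, 0 <= r /\ b = (r * cos th) +i* (r * sin th) /\
    (`|th| <= th0 \/ `|th - pi| <= th0).

Definition Amx (lam mu : R) : 'M[C]_2 :=
  \matrix_(i < 2, j < 2)
    (if i == j then (if i == 0 :> nat then (lam + 2 * mu)%:C else mu%:C) else 0).
Definition Bmx (lam mu : R) : 'M[C]_2 :=
  \matrix_(i < 2, j < 2) (if i == j then 0 else (lam + mu)%:C).
Definition Cmx (lam mu : R) : 'M[C]_2 :=
  \matrix_(i < 2, j < 2)
    (if i == j then (if i == 0 :> nat then mu%:C else (lam + 2 * mu)%:C) else 0).

Definition L0mat (lam mu : R) (xi b : C) : 'M[C]_2 :=
  xi ^+ 2 *: Amx lam mu + (b * xi) *: Bmx lam mu + b ^+ 2 *: Cmx lam mu.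

Definition L0poly (lam mu : R) (b : C) : 'M[{poly C}]_2 :=
  \matrix_(i < 2, j < 2)
    ((Amx lam mu i j)%:P * 'X^2 + (b * Bmx lam mu i j)%:P * 'X
       + (b ^+ 2 * Cmx lam mu i j)%:P).

Definition roots_mult (p : {poly C}) (rs : seq C) : Prop :=
  p != 0 /\ p = lead_coef p *: \prod_(z <- rs) ('X - z%:P).

Definition upper (z : C) : bool := 0 < Im z.
Definition lower (z : C) : bool := Im z < 0.

Definition equally_distributed (p : {poly C}) : Prop :=
  exists rs, roots_mult p rs /\ count upper rs = count lower rs /\
    (count upper rs + count lower rs = size rs)%N.

(* Agranovich--Vishik ellipticity with parameter for an N x N system of order s
   with principal symbol L0 (a polynomial matrix in z for each parameter q),
   parameter set Q, and r boundary conditions. *)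
Definition AV_condition (N s r : nat) (Q : C -> Prop)
    (L0 : C -> 'M[{poly C}]_N) : Prop :=
  (forall (xi : R) (q : C), Q q -> (xi != 0) || (q != 0) ->
      \det (map_mx (horner^~ xi%:C) (L0 q)) != 0) /\
  (forall q : C, Q q -> q != 0 -> equally_distributed (\det (L0 q))) /\
  (2 * r = N * s)%N.

End Defs.

(* Main.v *)
Require Import Defs.
From HB Require Import structures.
From mathcomp Require Import all_boot all_order all_algebra.
From mathcomp Require Import reals trigo complex.
From mathcomp Require Import ring lra.
Import Order.TTheory GRing.Theory Num.Theory.
Local Open Scope ring_scope.
Local Open Scope complex_scope.
Lemma det2 (T : comNzRingType) (A : 'M[T]_2) : \det A = A 0 0 * A 1 1 - A 0 1 * A 1 0.
Proof.
rewrite (expand_det_row _ ord0) !big_ord_recl big_ord0 addr0 /cofactor !det_mx11 !mxE /=.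
have E1 : lift ord0 (0 : 'I_1) = 1 :> 'I_2 by exact/val_inj.
have E2 : lift (1 : 'I_2) (0 : 'I_1) = 0 :> 'I_2 by exact/val_inj.
have E3 : lift ord0 (ord0 : 'I_1) = 1 :> 'I_2 by exact/val_inj.
rewrite E1 ?E3 ?E2 /bump /= expr0 expr1 mul1r mulN1r.
rewrite -[ord0]/(0 : 'I_2). ring.
Qed.

Section S.
Variable R : realType.
Lemma detL (lam mu : R) (xi b : R[i]) : \det (L0mat lam mu xi b) = ((lam + 2*mu) * mu)%:C * (xi^+2 + b^+2)^+2.
Proof.
rewrite det2 !mxE /=.
rewrite !(rmorphD, rmorphM) /=. ring.
Qed.
End S.
Section S2.
Variable R : realType.
Lemma upperE (z : R[i]) : upper z = (0 < complex.Im z).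
Proof. by rewrite /upper -complexIm ltcE /= eqxx. Qed.
Lemma lowerE (z : R[i]) : lower z = (complex.Im z < 0).
Proof. by rewrite /lower -complexIm ltcE /= eqxx. Qed.

Lemma sector_re (th0 : R) (b : R[i]) : 0 < th0 -> th0 < pi / 2 -> in_Bsector th0 b -> b != 0 -> complex.Re b != 0.
Proof.
move=> h0 h1 [r [th [r0 [-> Hth]]]] Hb /=.
have rn : r != 0 by apply: contraNneq Hb => ->; rewrite !mul0r.
rewrite mulf_neq0 //.
case: Hth => h.
- rewrite gt_eqF // cos_gt0_pihalf //.
  move: h; rewrite ler_norml => /andP [a c]; apply/andP; split; lra.
- have -> : cos th = - cos (th - pi) by rewrite -cosDpi subrK.
  rewrite oppr_eq0 gt_eqF // cos_gt0_pihalf //.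
  move: h; rewrite ler_norml => /andP [a c]; apply/andP; split; lra.
Qed.

Lemma nz (xi : R) (b : R[i]) : (b != 0 -> complex.Re b != 0) -> (xi != 0) || (b != 0) -> xi%:C^+2 + b^+2 != 0.
Proof.
case: b => x y /= H Hor; rewrite !expr2 eq_complex /=.
apply/negP => /andP [/eqP e1 /eqP e2].
have hx : x = 0.
  apply/eqP/negP => hx.
  have hy : y = 0 by apply/eqP; apply: contraT => hy; move: e2; nra.
  move: e1; rewrite hy; nra.
have hy : y = 0.
  apply/eqP; apply: contraT => hy; have := H; rewrite hx eqxx /=; apply; rewrite eq_complex /= negb_and hy orbT //.
move: Hor H e1 e2; rewrite hx hy => /orP [hxi|/eqP /(_ erefl) []] _ e1 _; nra.
Qed.

Lemma detP (lam mu : R) (b : R[i]) : \det (L0poly lam mu b) = (((lam + 2*mu) * mu)%:C)%:P * ('X^2 + (b^+2)%:P)^+2.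
Proof.
rewrite det2 !mxE /=.
rewrite !(rmorphD, rmorphM, rmorph0) /=. ring.
Qed.

Lemma detH (lam mu : R) (b xi : R[i]) : \det (map_mx (horner^~ xi) (L0poly lam mu b)) = ((lam + 2*mu) * mu)%:C * (xi^+2 + b^+2)^+2.
Proof.
rewrite det2 !mxE /= !hornerE /=.
rewrite !(rmorphD, rmorphM, rmorph0) /=. ring.
Qed.

Lemma rootsP (lam mu : R) (b : R[i]) : 0 < lam + 2 * mu -> 0 < mu -> complex.Re b != 0 ->
  exists rs : seq R[i], roots_mult (\det (L0poly lam mu b)) rs /\
        size rs = 4%N /\ count (@upper R) rs = 2%N /\ count (@lower R) rs = 2%N.
Proof.
move=> ha hm.
set k := ((lam + 2*mu) * mu)%:C.
have hk : k != 0 by rewrite /k eq_complex /= negb_and gt_eqF //; apply: mulr_gt0.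
case: b => x y /= hx.
set z1 : R[i] := (- y) +i* x. set z2 : R[i] := y +i* (- x).
exists [:: z1; z1; z2; z2].
have F : ('X - z1%:P) * ('X - z2%:P) = 'X^2 + ((x +i* y)^+2)%:P.
  have e1 : z1 + z2 = 0 by apply/eqP; rewrite eq_complex /=; apply/andP; split; apply/eqP; ring.
  have e2 : z1 * z2 = (x +i* y)^+2.
    by rewrite expr2; apply/eqP; rewrite eq_complex /=; apply/andP; split; apply/eqP; ring.
  rewrite -e2; transitivity ('X^2 - (z1+z2)%:P * 'X + (z1*z2)%:P).
    rewrite !(rmorphD, rmorphM) /=; ring.
  by rewrite e1 rmorph0 mul0r subr0.
have E : \det (L0poly lam mu (x +i* y)) = k *: \prod_(z <- [:: z1; z1; z2; z2]) ('X - z%:P).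
  rewrite detP !big_cons big_nil -F -mul_polyC; ring.
split; first split.
- rewrite E scale_poly_eq0 negb_or hk /=.
  by apply: monic_neq0; apply: monic_prod_XsubC.
- by rewrite {2}E lead_coefZ (monicP (monic_prod_XsubC _ _ _)) mulr1.
split; first by [].
rewrite /= !upperE !lowerE /=.
move: hx; rewrite neq_lt => /orP [h|h].
- have h1 : (0 < x) = false by apply/negbTE; rewrite -leNgt; lra.
  have h2 : (0 < - x) = true by rewrite oppr_gt0.
  have h3 : (x < 0) = true by [].
  have h4 : (- x < 0) = false by apply/negbTE; rewrite -leNgt; lra.
  by rewrite h1 h2 h3 h4.
- have h1 : (0 < x) = true by [].
  have h2 : (0 < - x) = false by apply/negbTE; rewrite -leNgt; lra.
  have h3 : (x < 0) = false by apply/negbTE; rewrite -leNgt; lra.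
  have h4 : (- x < 0) = true by rewrite oppr_lt0.
  by rewrite h1 h2 h3 h4.
Qed.
End S2.

Theorem lemma1 (R : realType) (lam mu th0 : R) :
  0 < mu -> 0 < 3 * lam + 2 * mu -> 0 < th0 -> th0 < pi / 2 ->
  (forall (xi : R) (b : R[i]), in_Bsector th0 b -> (xi != 0) || (b != 0) ->
      \det (L0mat lam mu xi%:C b) != 0) /\
  (forall b : R[i], in_Bsector th0 b -> b != 0 ->
      exists rs : seq R[i], roots_mult (\det (L0poly lam mu b)) rs /\
        size rs = 4%N /\ count (@upper R) rs = 2%N /\ count (@lower R) rs = 2%N) /\
  @AV_condition R 2 2 2 (in_Bsector th0) (L0poly lam mu).
Proof.
move=> hm h3 ht0 ht1.
have ha : 0 < lam + 2 * mu by lra.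
have hk : ((lam + 2*mu) * mu)%:C != 0 :> R[i].
  by rewrite eq_complex /= negb_and gt_eqF //; apply: mulr_gt0.
have P1 : forall (xi : R) (b : R[i]), in_Bsector th0 b -> (xi != 0) || (b != 0) ->
    ((lam + 2*mu) * mu)%:C * (xi%:C^+2 + b^+2)^+2 != 0.
  move=> xi b hb hor; rewrite mulf_neq0 // expf_neq0 // nz //.
  exact: sector_re hb.
have P2 : forall b : R[i], in_Bsector th0 b -> b != 0 ->
      exists rs : seq R[i], roots_mult (\det (L0poly lam mu b)) rs /\
        size rs = 4%N /\ count (@upper R) rs = 2%N /\ count (@lower R) rs = 2%N.
  move=> b hb hb0; apply: rootsP => //; exact: sector_re hb hb0.
split; first by move=> xi b hb hor; rewrite detL; apply: P1.
split; first exact: P2.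
rewrite /AV_condition; split; last split => //.
  by move=> xi q hq hor; rewrite detH; apply: P1.
move=> q hq hq0; have [rs [r1 [r2 [r3 r4]]]] := P2 q hq hq0.
by exists rs; split => //; rewrite r3 r4 r2.
Qed.
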